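(* Let $H$ and $G$ be finite simple graphs with $n=|V(H)|$, $\Delta=\Delta(H)\ge 1$ and $\delta=\delta(G)\ge 1$. Let $S\subseteq V(H)$ be a maximum $G$-free subset of $V(H)$, and for each integer $i\ge 0$ let $n_i(S)$ denote the number of vertices of $V(H)\setminus S$ having exactly $i$ neighbours in $S$. Then \[ n-\frac{\sum_{i=\delta}^{\Delta} i\, n_i(S)}{\delta}\ \le\ |S|\ \le\ n-\frac{\sum_{i=\delta}^{\Delta} i\, n_i(S)}{\Delta}.\]
   Context: All graphs are finite, simple and undirected. For $W\subseteq V(H)$, $H[W]$ denotes the induced subgraph on $W$. A set $S\subseteq V(H)$ is called $G$-free if $H[S]$ contains no subgraph isomorphic to $G$. A maximum $G$-free subset of $V(H)$ is a $G$-free subset $S\subseteq V(H)$ of largest possible cardinality. $\Delta(H)$ is the maximum degree of $H$, $\delta(G)$ the minimum degree of $G$. *)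

(* Defs.v *)
From mathcomp Require Import all_boot all_order all_algebra.
Set Implicit Arguments. Unset Strict Implicit. Unset Printing Implicit Defensive.

Definition simple_graph (T : finType) (e : rel T) : Prop :=
  symmetric e /\ irreflexive e.

Definition deg (T : finType) (e : rel T) (v : T) : nat := #|[set u | e v u]|.

(* maximum degree (0 for the empty graph) *)
Definition maxdeg (T : finType) (e : rel T) : nat := \max_(v : T) deg e v.

(* minimum degree; on a nonempty graph this is the true minimum, since every
   degree is < #|T|. *)
Definition mindeg (T : finType) (e : rel T) : nat :=
  \big[minn/#|T|]_(v : T) deg e v.

Definition contains_copy (TG TH : finType) (eG : rel TG) (eH : rel TH)
  (S : {set TH}) : Prop :=
  exists f : TG -> TH,
    [/\ injective f, (forall x, f x \in S) & (forall x y, eG x y -> eH (f x) (f y))].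

Definition G_free (TG TH : finType) (eG : rel TG) (eH : rel TH) (S : {set TH}) : Prop :=
  ~ contains_copy eG eH S.

Definition max_G_free (TG TH : finType) (eG : rel TG) (eH : rel TH) (S : {set TH}) : Prop :=
  G_free eG eH S /\ (forall S' : {set TH}, G_free eG eH S' -> #|S'| <= #|S|).

Definition n_i (TH : finType) (eH : rel TH) (S : {set TH}) (i : nat) : nat :=
  #|[set v in ~: S | #|[set u in S | eH v u]| == i]|.

(* Main.v *)
Require Import Defs.
From mathcomp Require Import all_boot all_order all_algebra.
Import Order.TTheory GRing.Theory Num.Theory.

Lemma mindeg_le (T : finType) (e : rel T) x : (mindeg e <= deg e x)%N.
Proof.
rewrite /mindeg; have : x \in index_enum T by rewrite mem_index_enum.
elim: (index_enum T) => //= y r IH.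
rewrite in_cons big_cons => /orP[/eqP->|/IH h]; first exact: geq_minl.
exact: leq_trans (geq_minr _ _) h.
Qed.

Lemma sum_ni_inner (a b k : nat) :
  (\sum_(a <= i < b) i * (k == i) = if (a <= k < b) then k else 0)%N.
Proof.
case: ifP => hk.
  rewrite (bigD1_seq k) ?iota_uniq ?mem_index_iota //= eqxx muln1 big1 ?addn0 //.
  by move=> i /negbTE; rewrite eq_sym => ->; rewrite muln0.
rewrite big_seq big1 // => i; rewrite mem_index_iota => hi.
case: eqP => [Eki|]; last by rewrite muln0.
by subst; rewrite hi in hk.
Qed.

Lemma sum_ni (TH : finType) (P : {set TH}) (f : TH -> nat) (a b : nat) :
  (\sum_(a <= i < b) i * #|[set v in P | f v == i]| =
   \sum_(v in P) (if a <= f v < b then f v else 0))%N.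
Proof.
under eq_bigr => i _.
  rewrite -sum1_card big_distrr /= big_mkcond /=.
  under eq_bigr => v _ do rewrite inE muln1.
  over.
rewrite exchange_big /= [RHS]big_mkcond; apply: eq_bigr => v _.
case: (v \in P) => /=; first last.
  by rewrite big1.
rewrite -sum_ni_inner; apply: eq_bigr => i _.
by case: eqP => _; rewrite ?muln1 ?muln0.
Qed.

Theorem theorem2p2 (TH TG : finType) (eH : rel TH) (eG : rel TG)
  (hH : simple_graph eH) (hG : simple_graph eG)
  (hDelta : (1 <= maxdeg eH)%N) (hdelta : (1 <= mindeg eG)%N)
  (S : {set TH}) (hS : max_G_free eG eH S) :
  let n := #|TH| in
  let Delta := maxdeg eH in
  let delta := mindeg eG in
  let s := (\sum_(delta <= i < Delta.+1) i * n_i eH S i)%N in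
  ((n%:R - s%:R / delta%:R <= #|S|%:R :> rat) /\
   (#|S|%:R <= n%:R - s%:R / Delta%:R :> rat))%R.
Proof.
move=> n Delta delta s.
pose f v := #|[set u in S | eH v u]|.
have fle v : (f v <= Delta)%N.
  apply: leq_trans (leq_bigmax v); apply: subset_leq_card.
  by apply/subsetP => u; rewrite !inE => /andP[].
have fge v : v \in ~: S -> (delta <= f v)%N.
  rewrite inE => vS; rewrite leqNgt; apply/negP => hlt.
  case: hS => hfree hmax.
  have : ~ G_free eG eH (v |: S).
    move=> /hmax; rewrite cardsU1 vS /=; by rewrite add1n ltnn.
  apply => -[g [ginj gS gE]].
  case: (boolP [exists x, g x == v]) => [/existsP [x /eqP gx]|].
    have : (deg eG x <= f v)%N.
      rewrite /deg -(card_imset _ ginj); apply: subset_leq_card.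
      apply/subsetP => u /imsetP [y]; rewrite inE => exy ->.
      have := gS y; rewrite !inE => /orP [/eqP gyv|->].
        by move: exy; rewrite -gx in gyv; rewrite (ginj _ _ gyv) (proj2 hG).
      by rewrite -gx gE.
    by move=> h; move: (leq_trans (@mindeg_le _ eG x) h); rewrite leqNgt hlt.
  rewrite negb_exists => /forallP gnv; apply: hfree; exists g; split => //.
  by move=> x; have := gS x; rewrite !inE (negbTE (gnv x)).
have es : s = (\sum_(v in ~: S) f v)%N.
  rewrite /s /n_i (@sum_ni _ (~: S) f) ; apply: eq_bigr => v vS.
  by rewrite fge //= ltnS fle.
have cS : #|~: S| = (n - #|S|)%N by rewrite cardsCs setCK.
have lo : (delta * (n - #|S|) <= s)%N.
  rewrite es -cS -sum1_card big_distrr /=; apply: leq_sum => v vS.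
  by rewrite muln1 fge.
have hi : (s <= Delta * (n - #|S|))%N.
  rewrite es -cS -sum1_card big_distrr /=; apply: leq_sum => v vS.
  by rewrite muln1 fle.
have Sn : (#|S| <= n)%N by apply: max_card.
have d0 : (0 < delta%:R :> rat)%R by rewrite ltr0n.
have D0 : (0 < Delta%:R :> rat)%R by rewrite ltr0n.
split.
  rewrite lerBlDr addrC -lerBlDr ler_pdivlMr // -natrB // -natrM ler_nat.
  by rewrite mulnC.
rewrite lerBrDr addrC -lerBrDr ler_pdivrMr // -natrB // -natrM ler_nat.
by rewrite mulnC.
Qed.
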